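(* Let $\mathbb{F}\in\{\mathbb{R},\mathbb{C}\}$, $A\in\mathbb{F}^{m\times n}$ with $\|A\|_{\infty,col}\le1$, $\mu>0$, $x_0\in\mathbb{F}^n$ with $S=\mathrm{supp}\,x_0$ and $\#S=K$, $\epsilon\in\mathbb{F}^m$, $b=Ax_0+\epsilon$, and assume $\beta_K>0$. If $\|\epsilon\|_2<\sqrt{\mu}$ and $$|x_{0,j}|>\sqrt{\mu}+\frac{\|\epsilon\|_2}{\beta_K}\quad\text{for all }j\in S,$$ then the oracle solution $x'=x_S$ is a strict local minimizer of $\mathcal{K}_{reg}$ with $\mathrm{supp}(x')=\mathrm{supp}(x_0)$. Moreover $|x'_j|>\sqrt{\mu}$ for $j\in S$, $\|Ax'-b\|_2\le\|\epsilon\|_2$, and $\|x'-x_0\|_2\le\|\epsilon\|_2/\beta_K$.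
   Context: $\|A\|_{\infty,col}=\max_i\|a_i\|_2$ over the columns $a_i$ of $A$. $\mathrm{card}(x)$ is the number of nonzero entries; $\beta_k=\inf\{\|Ax\|_2/\|x\|_2:x\ne0,\ \mathrm{card}(x)\le k\}$. $\mathcal{K}_{reg}(x)=\mathcal{Q}_2(\mu\,\mathrm{card})(x)+\|Ax-b\|_2^2$ with $\mathcal{Q}_2(\mu\,\mathrm{card})(x)=\sum_{j=1}^n\big(\mu-(\max\{\sqrt{\mu}-|x_j|,0\})^2\big)$. $A_S$ denotes $A$ with all columns with index outside $S$ set to zero, and the oracle solution is $x_S=(A_S^*A_S)^\dagger A_S^*b$ (the least squares solution of $A_Sx=b$ supported in $S$), where $\dagger$ is the Moore–Penrose inverse and $A^*$ the conjugate transpose. *)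

(* Defs.v *)
From mathcomp Require Import all_boot all_order all_algebra.
From mathcomp Require Import classical_sets reals.
From mathcomp Require Export complex.
Set Implicit Arguments. Unset Strict Implicit. Unset Printing Implicit Defensive.
Import Order.TTheory GRing.Theory Num.Theory.
Local Open Scope ring_scope.

(* Generic setting: the real numbers R (a realType) and a scalar field F
   (F = R or F = R[i]) equipped with its conjugation [conj] and its modulus
   [md : F -> R]. *)
Section Generic.
Variables (R : realType) (F : fieldType) (conj : F -> F) (md : F -> R).

Definition vnorm2 k (v : 'cV[F]_k) : R := Num.sqrt (\sum_i md (v i 0) ^+ 2).

Definition colnorm_le1 m n (A : 'M[F]_(m, n)) : Prop :=
  forall j : 'I_n, Num.sqrt (\sum_i md (A i j) ^+ 2) <= 1.

Definition supp n (x : 'cV[F]_n) : {set 'I_n} := [set j | x j 0 != 0].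
Definition card n (x : 'cV[F]_n) : nat := #|supp x|.

Definition beta m n (A : 'M[F]_(m, n)) (k : nat) : R :=
  inf [set r : R | exists x : 'cV[F]_n,
         [/\ x != 0, (card x <= k)%N & r = vnorm2 (A *m x) / vnorm2 x]].

Definition Q2card n (mu : R) (x : 'cV[F]_n) : R :=
  \sum_j (mu - (Num.max (Num.sqrt mu - md (x j 0)) 0) ^+ 2).

Definition Kreg m n (A : 'M[F]_(m, n)) (b : 'cV[F]_m) (mu : R) (x : 'cV[F]_n) : R :=
  Q2card mu x + vnorm2 (A *m x - b) ^+ 2.

Definition restrict_cols m n (A : 'M[F]_(m, n)) (S : {set 'I_n}) : 'M[F]_(m, n) :=
  \matrix_(i, j) (if j \in S then A i j else 0).

Definition adjoint m n (M : 'M[F]_(m, n)) : 'M[F]_(n, m) := (map_mx conj M)^T.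

(* X is the Moore--Penrose inverse of M (the four Penrose equations;
   these determine X uniquely). *)
Definition is_MP_inverse m n (M : 'M[F]_(m, n)) (X : 'M[F]_(n, m)) : Prop :=
  [/\ M *m X *m M = M, X *m M *m X = X,
      adjoint (M *m X) = M *m X & adjoint (X *m M) = X *m M].

Definition strict_local_min n (f : 'cV[F]_n -> R) (x : 'cV[F]_n) : Prop :=
  exists2 delta : R, 0 < delta &
    forall y : 'cV[F]_n, y != x -> vnorm2 (y - x) < delta -> f x < f y.

(* Proposition 4.6, over the scalar field F. [X] is the Moore--Penrose
   inverse of A_S^* A_S, so that X A_S^* b = (A_S^* A_S)^dagger A_S^* b = x_S. *)
Definition prop46 : Prop :=
  forall (m n : nat) (A : 'M[F]_(m, n)) (mu : R) (x0 : 'cV[F]_n)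
         (eps b : 'cV[F]_m) (X : 'M[F]_n),
    colnorm_le1 A ->
    0 < mu ->
    b = A *m x0 + eps ->
    let S := supp x0 in
    let K := #|S| in
    0 < beta A K ->
    vnorm2 eps < Num.sqrt mu ->
    (forall j, j \in S -> md (x0 j 0) > Num.sqrt mu + vnorm2 eps / beta A K) ->
    let AS := restrict_cols A S in
    is_MP_inverse (adjoint AS *m AS) X ->
    let x' := X *m adjoint AS *m b in
    [/\ strict_local_min (Kreg A b mu) x',
        supp x' = supp x0,
        (forall j, j \in S -> md (x' j 0) > Num.sqrt mu),
        vnorm2 (A *m x' - b) <= vnorm2 eps
      & vnorm2 (x' - x0) <= vnorm2 eps / beta A K].

End Generic.

(* Main.v *)
Require Import Defs.
From mathcomp Require Import all_boot all_order all_algebra.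
From mathcomp Require Import classical_sets reals complex.
From mathcomp Require Import ring lra.
Set Implicit Arguments. Unset Strict Implicit. Unset Printing Implicit Defensive.
Import Order.TTheory GRing.Theory Num.Theory.
Local Open Scope ring_scope.

Section Gen.
Variables (R : realType) (F : fieldType) (conj : F -> F) (md : F -> R)
  (emb : R -> F) (rho : F -> R).
Hypothesis conjD : forall x y, conj (x + y) = conj x + conj y.
Hypothesis conjM : forall x y, conj (x * y) = conj x * conj y.
Hypothesis conj0 : conj 0 = 0.
Hypothesis conjN : forall x, conj (- x) = - conj x.
Hypothesis conjK : forall x, conj (conj x) = x.
Hypothesis embD : forall a b, emb (a + b) = emb a + emb b.
Hypothesis emb0 : emb 0 = 0.
Hypothesis emb_inj : injective emb.
Hypothesis mdsq : forall x, x * conj x = emb (md x ^+ 2).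
Hypothesis md_ge0 : forall x, 0 <= md x.
Hypothesis md0 : md 0 = 0.
Hypothesis md_eq0 : forall x, md x = 0 -> x = 0.
Hypothesis mdM : forall x y, md (x * y) = md x * md y.
Hypothesis mdD : forall x y, md (x + y) <= md x + md y.
Hypothesis mdN : forall x, md (- x) = md x.
Hypothesis mdJ : forall x, md (conj x) = md x.
Hypothesis rhoE : forall x, x + conj x = emb (rho x).
Hypothesis rho_le : forall x, `|rho x| <= md x *+ 2.

Local Notation vn := (vnorm2 md).
Local Notation adj := (adjoint conj).
Definition nsq k (v : 'cV[F]_k) := \sum_i md (v i 0) ^+ 2.
Definition ip k (u w : 'cV[F]_k) : F := \sum_i conj (u i 0) * w i 0.

Lemma conj_sum I (r : seq I) (P : pred I) (f : I -> F) :
  conj (\sum_(i <- r | P i) f i) = \sum_(i <- r | P i) conj (f i).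
Proof. exact: (big_morph conj conjD conj0). Qed.

Lemma emb_sum I (r : seq I) (P : pred I) (f : I -> R) :
  emb (\sum_(i <- r | P i) f i) = \sum_(i <- r | P i) emb (f i).
Proof. exact: (big_morph emb embD emb0). Qed.

Lemma nsq_ge0 k (v : 'cV[F]_k) : 0 <= nsq v.
Proof. by apply: sumr_ge0 => i _; apply: sqr_ge0. Qed.

Lemma vn_ge0 k (v : 'cV[F]_k) : 0 <= vn v.
Proof. exact: sqrtr_ge0. Qed.

Lemma vn_sq k (v : 'cV[F]_k) : vn v ^+ 2 = nsq v.
Proof. by rewrite /vnorm2 sqr_sqrtr // nsq_ge0. Qed.

Lemma ipvv k (v : 'cV[F]_k) : ip v v = emb (nsq v).
Proof. by rewrite /ip /nsq emb_sum; apply: eq_bigr => i _; rewrite mulrC mdsq. Qed.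

Lemma ipC k (u w : 'cV[F]_k) : conj (ip u w) = ip w u.
Proof. by rewrite /ip conj_sum; apply: eq_bigr => i _; rewrite conjM conjK mulrC. Qed.

Lemma ipDl k (u v w : 'cV[F]_k) : ip (u + v) w = ip u w + ip v w.
Proof. by rewrite /ip -big_split; apply: eq_bigr => i _; rewrite mxE conjD mulrDl. Qed.

Lemma ipDr k (u v w : 'cV[F]_k) : ip w (u + v) = ip w u + ip w v.
Proof. by rewrite /ip -big_split; apply: eq_bigr => i _; rewrite mxE mulrDr. Qed.

Lemma ip0l k (w : 'cV[F]_k) : ip 0 w = 0.
Proof. by rewrite /ip big1 // => i _; rewrite mxE conj0 mul0r. Qed.

Lemma rho0 : rho 0 = 0.
Proof. by apply: emb_inj; rewrite -rhoE conj0 addr0 emb0. Qed.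

Lemma nsqD k (u w : 'cV[F]_k) : nsq (u + w) = nsq u + nsq w + rho (ip u w).
Proof.
apply: emb_inj; rewrite !embD -!ipvv -rhoE ipC ipDl !ipDr.
ring.
Qed.

Lemma nsqN k (u : 'cV[F]_k) : nsq (- u) = nsq u.
Proof. by apply: eq_bigr => i _; rewrite mxE mdN. Qed.

Lemma rcs (I : finType) (a b : I -> R) :
  (\sum_i a i * b i) ^+ 2 <= (\sum_i a i ^+ 2) * (\sum_i b i ^+ 2).
Proof.
set A := \sum_i a i ^+ 2; set B := \sum_i b i ^+ 2; set C := \sum_i a i * b i.
have A0 : 0 <= A by apply: sumr_ge0 => i _; apply: sqr_ge0.
have B0 : 0 <= B by apply: sumr_ge0 => i _; apply: sqr_ge0.
have [Az|Ap] := eqVneq A 0.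
  have ai : forall i, a i = 0.
    move=> i; apply/eqP; rewrite -sqrf_eq0; apply/eqP.
    by apply: (psumr_eq0P _ Az) => // j _; apply: sqr_ge0.
  rewrite /C big1 ?expr0n ?mulr_ge0 // => i _; by rewrite ai mul0r.
have Apos : 0 < A by rewrite lt0r Ap.
have E : \sum_i (C * a i - A * b i) ^+ 2 = C ^+ 2 * A - (C * A *+ 2) * C + A ^+ 2 * B.
  rewrite (eq_bigr (fun i => C ^+ 2 * a i ^+ 2 - (C * A *+ 2) * (a i * b i)
     + A ^+ 2 * b i ^+ 2)); last by move=> i _; ring.
  by rewrite big_split sumrB /= -!mulr_sumr.
have : 0 <= \sum_i (C * a i - A * b i) ^+ 2 by apply: sumr_ge0 => i _; apply: sqr_ge0.
rewrite E => H. nra.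
Qed.

Lemma md_sum I (r : seq I) (P : pred I) (f : I -> F) :
  md (\sum_(i <- r | P i) f i) <= \sum_(i <- r | P i) md (f i).
Proof.
apply: (big_ind2 (fun x y => md x <= y)); first by rewrite md0.
  by move=> x1 x2 y1 y2 h1 h2; apply: le_trans (mdD _ _) (lerD h1 h2).
by [].
Qed.

Lemma cs k (u w : 'cV[F]_k) : md (ip u w) <= vn u * vn w.
Proof.
apply: le_trans (md_sum _ _ _) _.
rewrite (eq_bigr (fun i => md (u i 0) * md (w i 0))); last first.
  by move=> i _; rewrite mdM mdJ.
rewrite /vnorm2 -sqrtrM ?nsq_ge0 //.
apply: le_trans (ler_norm _) _.
rewrite -sqrtr_sqr ler_sqrt ?mulr_ge0 ?nsq_ge0 //.
exact: rcs.
Qed.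

Lemma vnD k (u w : 'cV[F]_k) : vn (u + w) <= vn u + vn w.
Proof.
rewrite {1}/vnorm2 -[vn u + vn w]ger0_norm ?addr_ge0 ?vn_ge0 // -sqrtr_sqr.
rewrite ler_sqrt ?sqr_ge0 // -[X in X <= _]/(nsq (u + w)) nsqD sqrrD !vn_sq.
have := rho_le (ip u w); rewrite ler_norml => /andP[_ h].
have := cs u w. rewrite -!vn_sq => h2.
lra.
Qed.

Lemma vnZ k c (v : 'cV[F]_k) : vn (c *: v) = md c * vn v.
Proof.
rewrite /vnorm2 (eq_bigr (fun i => md c ^+ 2 * md (v i 0) ^+ 2)); last first.
  by move=> i _; rewrite mxE mdM exprMn.
by rewrite -mulr_sumr sqrtrM ?sqr_ge0 // sqrtr_sqr ger0_norm.
Qed.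

Lemma vn0 k : vn (0 : 'cV[F]_k) = 0.
Proof. by rewrite /vnorm2 big1 ?sqrtr0 // => i _; rewrite mxE md0 expr0n. Qed.

Lemma vn_sum k I (r : seq I) (P : pred I) (f : I -> 'cV[F]_k) :
  vn (\sum_(i <- r | P i) f i) <= \sum_(i <- r | P i) vn (f i).
Proof.
apply: (big_ind2 (fun x y => vn x <= y)); first by rewrite vn0.
  by move=> x1 x2 y1 y2 h1 h2; apply: le_trans (vnD _ _) (lerD h1 h2).
by [].
Qed.

Lemma vn_eq0 k (v : 'cV[F]_k) : vn v = 0 -> v = 0.
Proof.
move=> /eqP; rewrite sqrtr_eq0 => h.
have h0 : nsq v = 0 by apply/eqP; rewrite eq_le h nsq_ge0.
apply/matrixP => i j; rewrite (ord1 j) mxE; apply: md_eq0.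
apply/eqP; rewrite -sqrf_eq0; apply/eqP.
by apply: (psumr_eq0P _ h0) => // l _; apply: sqr_ge0.
Qed.

Lemma vn_entry k (v : 'cV[F]_k) i : md (v i 0) <= vn v.
Proof.
rewrite -[md _]ger0_norm // -sqrtr_sqr ler_sqrt ?nsq_ge0 //.
rewrite [X in _ <= X](bigD1 i) //= lerDl.
by apply: sumr_ge0 => j _; apply: sqr_ge0.
Qed.

Lemma vnN k (v : 'cV[F]_k) : vn (- v) = vn v.
Proof. by rewrite /vnorm2 -/(nsq (- v)) nsqN. Qed.

Lemma adjE m n (M : 'M[F]_(m, n)) i j : adj M i j = conj (M j i).
Proof. by rewrite !mxE. Qed.

Lemma adjM m n p (M : 'M[F]_(m, n)) (N : 'M[F]_(n, p)) :
  adj (M *m N) = adj N *m adj M.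
Proof.
apply/matrixP => i j; rewrite adjE !mxE conj_sum; apply: eq_bigr => l _.
by rewrite !adjE conjM mulrC.
Qed.

Lemma adjK m n (M : 'M[F]_(m, n)) : adj (adj M) = M.
Proof. by apply/matrixP => i j; rewrite !adjE conjK. Qed.

Lemma adjB m n (M N : 'M[F]_(m, n)) : adj (M - N) = adj M - adj N.
Proof. by apply/matrixP => i j; rewrite !mxE conjD conjN. Qed.

Lemma ip_adj m n (u : 'cV[F]_m) (M : 'M[F]_(m, n)) (v : 'cV[F]_n) :
  ip u (M *m v) = ip (adj M *m u) v.
Proof.
rewrite /ip.
rewrite (eq_bigr (fun i => \sum_l conj (u i 0) * (M i l * v l 0))); last first.
  by move=> i _; rewrite mxE big_distrr.
rewrite exchange_big; apply: eq_bigr => l _.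
rewrite mxE conj_sum big_distrl; apply: eq_bigr => i _.
by rewrite adjE conjM conjK mulrA [conj _ * M i l]mulrC.
Qed.

Lemma adj_zero m n (Z : 'M[F]_(m, n)) : Z *m adj Z = 0 -> Z = 0.
Proof.
move=> /matrixP H; apply/matrixP => i j; rewrite mxE.
have := H i i; rewrite !mxE.
rewrite (eq_bigr (fun l => emb (md (Z i l) ^+ 2))); last first.
  by move=> l _; rewrite adjE mdsq.
rewrite -emb_sum => h.
have h0 : \sum_l md (Z i l) ^+ 2 = 0 by apply: emb_inj; rewrite h emb0.
apply: md_eq0.
apply/eqP; rewrite -sqrf_eq0; apply/eqP.
by apply: (psumr_eq0P _ h0) => // l _; apply: sqr_ge0.
Qed.

Lemma mul_restrict m n (A : 'M[F]_(m, n)) (S : {set 'I_n}) (v : 'cV[F]_n) :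
  (forall j, j \notin S -> v j 0 = 0) -> A *m v = restrict_cols A S *m v.
Proof.
move=> H; apply/matrixP => i k; rewrite (ord1 k) !mxE; apply: eq_bigr => j _.
rewrite /restrict_cols mxE; case: ifP => // /negbT /H ->; by rewrite !mulr0.
Qed.

Lemma adj_restrict_row m n p (A : 'M[F]_(m, n)) (S : {set 'I_n})
  (W : 'M[F]_(m, p)) j k :
  j \notin S -> (adj (restrict_cols A S) *m W) j k = 0.
Proof.
move=> jS; rewrite mxE big1 // => i _; rewrite adjE mxE (negbTE jS) conj0.
by rewrite mul0r.
Qed.

Lemma fin_pos_min n (P : pred 'I_n) (f : 'I_n -> R) :
  (forall j, P j -> 0 < f j) -> exists2 g, 0 < g & forall j, P j -> g <= f j.
Proof.
move=> Hf.
suff: forall s : seq 'I_n, exists2 g, 0 < g & forall j, j \in s -> P j -> g <= f j.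
  by case/(_ (enum 'I_n)) => g g0 Hg; exists g => // j; apply: Hg; rewrite mem_enum.
elim => [|a s [g g0 Hg]]; first by exists 1.
case Pa: (P a).
  exists (Num.min g (f a)); first by rewrite lt_min g0 Hf.
  move=> j; rewrite inE => /orP[/eqP->|js] Pj; rewrite ge_min.
    by rewrite lexx orbT.
  by rewrite Hg.
exists g => // j; rewrite inE => /orP[/eqP->|js] Pj; first by rewrite Pa in Pj.
exact: Hg.
Qed.

Lemma qlem (mu t : R) : 0 <= mu -> 0 <= t ->
  mu - (Num.max (Num.sqrt mu - t) 0) ^+ 2 >= Num.sqrt mu *+ 2 * t - t ^+ 2.
Proof.
move=> mu0 t0; have s0 := sqrtr_ge0 mu; have ss := sqr_sqrtr mu0.
have [h|h] := leP (Num.sqrt mu - t) 0; nra.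
Qed.

Lemma qbig (mu t : R) : 0 <= mu -> Num.sqrt mu <= t ->
  mu - (Num.max (Num.sqrt mu - t) 0) ^+ 2 = mu.
Proof.
move=> mu0 h; rewrite max_r ?expr0n ?subr0 //; by rewrite subr_le0.
Qed.

Lemma qzero (mu : R) : 0 <= mu -> mu - (Num.max (Num.sqrt mu - md 0) 0) ^+ 2 = 0.
Proof.
move=> mu0; rewrite md0 subr0 max_l ?sqrtr_ge0 // sqr_sqrtr // subrr //.
Qed.

Lemma beta_le m n (A : 'M[F]_(m, n)) (S : {set 'I_n}) (v : 'cV[F]_n) :
  (forall j, j \notin S -> v j 0 = 0) -> beta md A #|S| * vn v <= vn (A *m v).
Proof.
move=> Hv.
have [->|vn0] := eqVneq v 0; first by rewrite vn0 mulr0 vn_ge0.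
have vp : 0 < vn v.
  rewrite lt0r vn_ge0 andbT; apply/eqP => /vn_eq0 h; by rewrite h eqxx in vn0.
rewrite -ler_pdivlMr //.
rewrite /beta.
set E := (X in inf X).
have hl : has_lbound E.
  exists 0 => r [x [_ _ ->]]; exact: divr_ge0 (vn_ge0 _) (vn_ge0 _).
apply: (ge_inf hl); exists v; split => //.
rewrite /Defs.card; apply: subset_leq_card; apply/fintype.subsetP => j; rewrite inE => vj.
apply/negPn/negP => /Hv h; by rewrite h eqxx in vj.
Qed.

Theorem main : prop46 conj md.
Proof.
move=> m n A mu x0 eps b X Hcol Hmu Hb S K Hbeta Heps Hx0 AS [P1 P2 P3 P4] x'.
set M := adj AS *m AS in P1 P2 P3 P4.
have MadjE : adj M = M by rewrite /M adjM adjK.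
have XE : X = M *m adj X *m X.
  by rewrite -{1}P2 -P4 adjM MadjE.
have x'out : forall j, j \notin S -> x' j 0 = 0.
  move=> j jS; rewrite /x' XE /M -!mulmxA; exact: adj_restrict_row.
have S0 : forall j, j \notin S -> x0 j 0 = 0.
  by move=> j; rewrite /S /supp inE negbK => /eqP.
have AxE : A *m x' = AS *m x' := mul_restrict A x'out.
have Ax0E : A *m x0 = AS *m x0 := mul_restrict A S0.
have ZE : adj AS = M *m X *m adj AS.
  set Z := adj AS - M *m X *m adj AS.
  have ZA : Z *m AS = 0.
    by rewrite /Z mulmxBl -(mulmxA (M *m X)) -/M P1 subrr.
  have adjZ : adj Z = AS - AS *m (adj X *m M).
    by rewrite /Z adjB (adjM (M *m X)) (adjM M X) adjK MadjE.
  have : Z *m adj Z = 0 by rewrite adjZ mulmxBr ZA (mulmxA Z AS) ZA mul0mx subrr.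
  move/adj_zero => Z0; apply/eqP; rewrite -subr_eq0; apply/eqP; exact: Z0.
have normal : adj AS *m (AS *m x' - b) = 0.
  rewrite mulmxBr mulmxA -/M [in X in _ - X]ZE /x' !mulmxA subrr //.
set r := AS *m x' - b.
have ipr : forall h, ip r (AS *m h) = 0.
  by move=> h; rewrite ip_adj normal ip0l.
have pyth : forall h, nsq (r + AS *m h) = nsq r + nsq (AS *m h).
  by move=> h; rewrite nsqD ipr rho0 addr0.
have epsE : eps = - (r + AS *m (x0 - x')).
  rewrite /r mulmxBr -Ax0E Hb.
  by rewrite addrC addrA subrK opprB addrC addKr.
have nsq_eps : nsq eps = nsq r + nsq (AS *m (x0 - x')).
  by rewrite epsE nsqN pyth.
have Fr : vn r <= vn eps.
  rewrite /vnorm2 ler_sqrt; last exact: nsq_ge0.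
  rewrite -/(nsq r) -/(nsq eps) nsq_eps lerDl; exact: nsq_ge0.
have F4 : vn (A *m x' - b) <= vn eps by rewrite AxE.
set e := x0 - x'.
have eS : forall j, j \notin S -> e j 0 = 0.
  by move=> j jS; rewrite /e mxE [(- x') j 0]mxE x'out // S0 // oppr0 addr0.
have beta_e := beta_le A eS.
have Ae : A *m e = AS *m e := mul_restrict A eS.
have F5' : vn e <= vn eps / beta md A K.
  rewrite ler_pdivlMr // mulrC; apply: le_trans beta_e _.
  rewrite Ae /vnorm2 ler_sqrt; last exact: nsq_ge0.
  rewrite -/(nsq (AS *m e)) -/(nsq eps) nsq_eps; have := nsq_ge0 r; lra.
have F5 : vn (x' - x0) <= vn eps / beta md A K by rewrite -vnN opprB.
have F6 : forall j, j \in S -> md (x' j 0) > Num.sqrt mu.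
  move=> j jS; have := Hx0 j jS; have := vn_entry e j.
  have := mdD (x' j 0) (e j 0).
  have -> : x' j 0 + e j 0 = x0 j 0. rewrite /e [(x0 - x') j 0]mxE [(- x') j 0]mxE. ring.
  lra.
have F7 : supp x' = supp x0.
  apply/setP => j; rewrite !inE.
  have [jS|jS] := boolP (j \in S).
    have := F6 j jS; move: jS; rewrite /S /supp inE => -> h.
    apply/eqP => h0; rewrite h0 md0 in h.
    by have := sqrtr_ge0 mu; lra.
  by rewrite x'out // S0 // eqxx.
split; [|exact: F7|exact: F6|exact: F4|exact: F5].
set s := Num.sqrt mu.
have [g g0 Hg] := @fin_pos_min n (fun j => j \in S)
   (fun j => md (x' j 0) - s) (fun j jS => ltac:(rewrite subr_gt0; exact: F6)).
have se : 0 < s - vn eps by rewrite subr_gt0.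
exists (Num.min ((s - vn eps) *+ 2) g).
  by rewrite lt_min g0 andbT mulr2n; lra.
move=> y yx hd.
have hd1 : vnorm2 md (y - x') < (s - vn eps) *+ 2 by move: hd; rewrite lt_min => /andP[].
have hd2 : vnorm2 md (y - x') < g by move: hd; rewrite lt_min => /andP[].
set h := y - x' in hd1 hd2.
have yE : y = x' + h by rewrite /h addrC subrK.
set hc : 'cV[F]_n := \col_j (if j \in S then 0 else h j 0).
have hcS : forall j, j \in S -> hc j 0 = 0 by move=> j jS; rewrite mxE jS.
have hcN : forall j, j \notin S -> hc j 0 = h j 0 by move=> j jS; rewrite mxE (negbTE jS).
set T := \sum_j md (hc j 0).
have T0 : 0 <= T by apply: sumr_ge0.
have mdhc : forall j, md (hc j 0) <= vn h.
  move=> j; case: (boolP (j \in S)) => jS; first by rewrite hcS // md0 vn_ge0.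
  rewrite hcN //; exact: vn_entry.
have mu0 : 0 <= mu by exact: ltW.
have Qd : Q2card md mu y - Q2card md mu x' >=
    \sum_j (s *+ 2 * md (hc j 0) - md (hc j 0) ^+ 2).
  rewrite /Q2card -sumrB; apply: ler_sum => j _.
  case: (boolP (j \in S)) => jS.
    have hx : s <= md (x' j 0) by have := F6 j jS; rewrite -/s; lra.
    have hy : s <= md (y j 0).
      have := mdD (y j 0) (- h j 0); rewrite mdN.
      have -> : y j 0 + - h j 0 = x' j 0.
        by rewrite yE [(x' + h) j 0]mxE; ring.
      have := Hg j jS; have := vn_entry h j; lra.
    rewrite hcS // md0 mulr0 expr0n /= subr0 !qbig //; lra.
  rewrite x'out // qzero // subr0.
  have -> : y j 0 = hc j 0 by rewrite hcN // yE [(x' + h) j 0]mxE x'out // add0r.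
  exact: qlem.
have SQ : \sum_j md (hc j 0) ^+ 2 <= vn h * T.
  rewrite /T mulr_sumr; apply: ler_sum => j _.
  have := mdhc j; have := md_ge0 (hc j 0); nra.
have Qd' : Q2card md mu y - Q2card md mu x' >= s *+ 2 * T - \sum_j md (hc j 0) ^+ 2.
  by rewrite /T mulr_sumr -sumrB.
have Aye : A *m y - b = r + A *m h by rewrite yE mulmxDr AxE /r addrAC.
set hs := h - hc.
have hsS : forall j, j \notin S -> hs j 0 = 0.
  by move=> j jS; rewrite /hs mxE [(- hc) j 0]mxE hcN // subrr.
have ipd : ip r (A *m h) = ip r (A *m hc).
  have -> : h = hs + hc by rewrite /hs subrK.
  by rewrite mulmxDr ipDr (mul_restrict A hsS) ipr add0r.
have AhcT : vn (A *m hc) <= T.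
  have -> : A *m hc = \sum_j hc j 0 *: col j A.
    apply/matrixP => i k; rewrite (ord1 k) !mxE summxE; apply: eq_bigr => j _.
    by rewrite !mxE mulrC.
  apply: le_trans (vn_sum _ _ _) _; rewrite /T; apply: ler_sum => j _.
  rewrite vnZ; apply: ler_piMr => //.
  have -> : vn (col j A) = Num.sqrt (\sum_i md (A i j) ^+ 2).
    by rewrite /vnorm2; congr Num.sqrt; apply: eq_bigr => i _; rewrite !mxE.
  exact: Hcol.
have rhob : rho (ip r (A *m hc)) >= - (vn eps * T *+ 2).
  have := rho_le (ip r (A *m hc)); rewrite ler_norml => /andP[h1 _].
  have := cs r (A *m hc); have := vn_ge0 r; have := vn_ge0 (A *m hc).
  move: h1; rewrite !mulr2n; nra.
have P : 0 < T * ((s - vn eps) *+ 2 - vn h) + nsq (A *m h).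
  have [Tz|Tp] := eqVneq T 0.
    have hc0 : forall j, hc j 0 = 0.
      by move=> j; apply: md_eq0; apply: (psumr_eq0P _ Tz).
    have hS : forall j, j \notin S -> h j 0 = 0 by move=> j jS; rewrite -hcN.
    have h0 : h != 0 by rewrite /h subr_eq0.
    have vh : 0 < vn h.
      rewrite lt0r vn_ge0 andbT; apply/eqP => /vn_eq0 hh; by rewrite hh eqxx in h0.
    have := beta_le A hS; rewrite -/K => hb.
    have vah : 0 < vn (A *m h) by apply: lt_le_trans hb; rewrite mulr_gt0.
    rewrite Tz mul0r add0r -vn_sq; exact: exprn_gt0.
  have Tpos : 0 < T by rewrite lt0r Tp T0.
  have : 0 < T * ((s - vn eps) *+ 2 - vn h) by rewrite mulr_gt0 // subr_gt0.
  have := nsq_ge0 (A *m h); lra.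
rewrite /Kreg !vn_sq Aye AxE -/r (nsqD r) ipd.
move: Qd' SQ rhob P; rewrite !mulr2n; nra.
Qed.

End Gen.

Theorem proposition4p6 (R : realType) :
  prop46 (F := R) id (@Num.norm _ R) /\
  prop46 (F := R[i]) (@conjc R) (@Normc.normc R).
Proof.
split.
- apply: (@main R R id (@Num.norm _ R) id (fun x => x *+ 2)).
  + by [].
  + by [].
  + by [].
  + by [].
  + by [].
  + by [].
  + by [].
  + by move=> a b.
  + by move=> x /=; rewrite real_normK ?num_real // expr2.
  + by move=> x; apply: normr_ge0.
  + exact: normr0.
  + by move=> x /eqP; rewrite normr_eq0 => /eqP.
  + exact: normrM.
  + exact: ler_normD.
  + exact: normrN.
  + by [].
  + by move=> x; rewrite mulr2n.
  + by move=> x; rewrite normrMn.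
- apply: (@main R R[i] (@conjc R) (@Normc.normc R) (fun r => (r%:C)%C) (fun x => (@complex.Re R x) *+ 2)).
  + exact: rmorphD.
  + exact: rmorphM.
  + exact: rmorph0.
  + exact: rmorphN.
  + exact: conjcK.
  + exact: rmorphD.
  + exact: rmorph0.
  + exact: complexI.
  + by move=> x; rewrite -sqr_normc rmorphXn.
  + by case=> a b; apply: sqrtr_ge0.
  + exact: Normc.normc0.
  + exact: Normc.eq0_normc.
  + exact: Normc.normcM.
  + by move=> x y; rewrite -lecR rmorphD; exact: (ler_normD x y).
  + by move=> x; apply: complexI; exact: (normrN x).
  + by move=> x; apply: complexI; exact: (normcJ x).
  + by move=> x; rewrite addcJ rmorphMn mulr_natl.
  + case=> a b /=; rewrite normrMn.
    have : `|a| <= Num.sqrt (a ^+ 2 + b ^+ 2).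
      by rewrite -sqrtr_sqr ler_sqrt ?addr_ge0 ?sqr_ge0 // lerDl sqr_ge0.
    rewrite !mulr2n; lra.
Qed.
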